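(* Suppose $m=0$ (purely deterministic problem) and, for $\mathfrak{g}\in\{\mathfrak{h},\mathfrak{r},\mathfrak{d}\}$, let $\mathcal{G}(q)=\max\{\mathfrak{g}(\tau):\tau\in T,\ \rho(\tau)\le q\}$. Then for every integer $q\ge1$: $\mathcal{G}(q)=q$ for $\mathfrak{g}=\mathfrak{h}$ (simple iterations); $\mathcal{G}(q)=\lfloor\frac{q+1}{2}\rfloor$ for $\mathfrak{g}=\mathfrak{r}$ (modified Newton iterations); $\mathcal{G}(q)=\lfloor\log_2(q+1)\rfloor$ for $\mathfrak{g}=\mathfrak{d}$ (full Newton iterations).
   Context: With $m=0$, $T$ is the set of rooted trees (all vertices of the single color $0$): the empty tree $\emptyset$ and all $\tau=[\tau_1,\dots,\tau_\kappa]_0$, $\kappa\ge0$, $\tau_j\in T\setminus\{\emptyset\}$ unordered (new root joined to roots of the $\tau_j$; $\bullet_0$ if $\kappa=0$). Order: $\rho(\emptyset)=0$, $\rho([\tau_1,\dots,\tau_\kappa]_0)=1+\sum_j\rho(\tau_j)$ (number of vertices). Maxima over empty sets are $0$. $\mathfrak{h}(\emptyset)=0$, $\mathfrak{h}(\bullet_0)=1$, $\mathfrak{h}([\tau_1,\dots,\tau_\kappa]_0)=1+\max_j\mathfrak{h}(\tau_j)$; $\mathfrak{r}(\emptyset)=0$, $\mathfrak{r}(\bullet_0)=1$, $\mathfrak{r}([\tau_1]_0)=\mathfrak{r}(\tau_1)$, $\mathfrak{r}([\tau_1,\dots,\tau_\kappa]_0)=1+\max_j\mathfrak{r}(\tau_j)$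 for $\kappa\ge2$; $\mathfrak{d}(\emptyset)=0$, $\mathfrak{d}(\bullet_0)=1$, $\mathfrak{d}([\tau_1,\dots,\tau_\kappa]_0)=M$ if exactly one $i$ has $\mathfrak{d}(\tau_i)=M:=\max_j\mathfrak{d}(\tau_j)$, and $M+1$ if at least two indices attain $M$. *)

(* Defs.v *)
(* Rooted trees with a single colour (m = 0). *)
From Stdlib Require Import List Arith.
Import ListNotations.

(* Children are stored as a list; all functions below are invariant under
   permutation of the children, so this represents unordered trees. *)
Inductive tree : Type := Node : list tree -> tree.

(* The set T = {empty tree} U {non-empty trees}. *)
Definition T := option tree.

Fixpoint tsize (t : tree) : nat :=
  match t with
  | Node l => 1 + (fix sz (l : list tree) : nat :=
                     match l with [] => 0 | c :: l' => tsize c + sz l' end) l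
  end.

Fixpoint hval (t : tree) : nat :=
  match t with
  | Node l => 1 + (fix mx (l : list tree) : nat :=
                     match l with [] => 0 | c :: l' => Nat.max (hval c) (mx l') end) l
  end.

Definition maxl (l : list nat) : nat := fold_right Nat.max 0 l.

Fixpoint rval (t : tree) : nat :=
  match t with
  | Node [] => 1
  | Node [c] => rval c
  | Node l => 1 + maxl ((fix vs (l : list tree) : list nat :=
                          match l with [] => [] | c :: l' => rval c :: vs l' end) l)
  end.

Fixpoint dval (t : tree) : nat :=
  match t with
  | Node [] => 1
  | Node l =>
      let v := (fix vs (l : list tree) : list nat :=
                  match l with [] => [] | c :: l' => dval c :: vs l' end) l in
      let M := maxl v in
      if 2 <=? count_occ Nat.eq_dec v M then M + 1 else M
  end.

Definition rho (t : T) : nat := match t with None => 0 | Some t => tsize t end.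
Definition h (t : T) : nat := match t with None => 0 | Some t => hval t end.
Definition r (t : T) : nat := match t with None => 0 | Some t => rval t end.
Definition d (t : T) : nat := match t with None => 0 | Some t => dval t end.

Definition is_G (g : T -> nat) (q v : nat) : Prop :=
  (exists tau : T, rho tau <= q /\ g tau = v) /\
  (forall tau : T, rho tau <= q -> g tau <= v).

(* Main.v *)
Require Import Defs.
From Stdlib Require Import List Arith Lia.
Import ListNotations.

Definition tree_ind' (P : tree -> Prop)
  (H : forall l, (forall x, In x l -> P x) -> P (Node l)) : forall t, P t :=
  fix F t := match t with
  | Node l => H l ((fix G (l : list tree) : forall x, In x l -> P x :=
      match l return forall x, In x l -> P x with
      | [] => fun x Hin => False_ind _ Hin
      | a :: l' => fun x Hin => match Hin with
                    | or_introl e => eq_ind a P (F a) x e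
                    | or_intror H' => G l' x H' end
      end) l) end.

Lemma map_rval_eq l0 : (fix vs (l : list tree) : list nat :=
                  match l with [] => [] | c :: l' => rval c :: vs l' end) l0
              = map rval l0.
Proof. induction l0 as [|x l0 IHl0]; simpl; [reflexivity|f_equal; exact IHl0]. Qed.
Lemma map_dval_eq l0 : (fix vs (l : list tree) : list nat :=
                  match l with [] => [] | c :: l' => dval c :: vs l' end) l0
              = map dval l0.
Proof. induction l0 as [|x l0 IHl0]; simpl; [reflexivity|f_equal; exact IHl0]. Qed.

Lemma tsize_node l : tsize (Node l) = S (list_sum (map tsize l)).
Proof. simpl. f_equal. induction l; simpl; congruence. Qed.

Lemma hval_node l : hval (Node l) = S (maxl (map hval l)).
Proof. simpl. f_equal. induction l; simpl; congruence. Qed.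

Lemma rval_node a b l : rval (Node (a :: b :: l)) = S (maxl (map rval (a :: b :: l))).
Proof. cbn [rval]. rewrite map_rval_eq. reflexivity. Qed.

Lemma rval_one a : rval (Node [a]) = rval a.
Proof. reflexivity. Qed.

Lemma dval_node a l : dval (Node (a :: l)) =
  let v := map dval (a :: l) in let M := maxl v in
  if 2 <=? count_occ Nat.eq_dec v M then M + 1 else M.
Proof. cbn [dval]. rewrite map_dval_eq. reflexivity. Qed.

Lemma maxl_In l : l <> [] -> In (maxl l) l.
Proof.
  induction l as [|a l IH]; intros Hn; [congruence|].
  simpl. destruct l as [|b l'].
  - simpl. left. lia.
  - destruct (Nat.max_spec a (maxl (b :: l'))) as [[_ E]|[_ E]]; rewrite E.
    + right. apply IH. discriminate.
    + left. reflexivity.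
Qed.

Lemma maxl_le_sum (f g : tree -> nat) l :
  (forall x, In x l -> f x <= g x) -> maxl (map f l) <= list_sum (map g l).
Proof.
  induction l as [|a l IH]; intros H; simpl; [lia|].
  assert (f a <= g a) by (apply H; left; auto).
  assert (maxl (map f l) <= list_sum (map g l)) by (apply IH; intros; apply H; right; auto).
  lia.
Qed.

Lemma h_bound : forall t, hval t <= tsize t.
Proof.
  apply tree_ind'. intros l IH. rewrite hval_node, tsize_node.
  apply le_n_S, maxl_le_sum; auto.
Qed.

Lemma size_pos t : 1 <= tsize t.
Proof. destruct t. rewrite tsize_node. lia. Qed.


Lemma maxl_attained (f : tree -> nat) l : l <> [] -> exists x, In x l /\ maxl (map f l) = f x.
Proof.
  intros Hn. assert (Hi : In (maxl (map f l)) (map f l)).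
  { apply maxl_In. destruct l; simpl; congruence. }
  apply in_map_iff in Hi. destruct Hi as [x [E Hx]]. eauto.
Qed.

Lemma sum_split (g : tree -> nat) l1 x l2 :
  list_sum (map g (l1 ++ x :: l2)) = list_sum (map g l1) + g x + list_sum (map g l2).
Proof. rewrite map_app, list_sum_app. simpl. lia. Qed.

Lemma sum_pos l : l <> [] -> 1 <= list_sum (map tsize l).
Proof. destruct l; [congruence|]. simpl. pose proof (size_pos t). lia. Qed.

Lemma r_bound : forall t, 2 * rval t <= tsize t + 1.
Proof.
  apply tree_ind'. intros l IH.
  destruct l as [|a [|b l]].
  - simpl. lia.
  - rewrite rval_one, tsize_node. simpl. specialize (IH a (or_introl eq_refl)). lia.
  - rewrite rval_node, tsize_node.
    destruct (maxl_attained rval (a :: b :: l)) as [x [Hx E]]; [discriminate|].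
    rewrite E. apply in_split in Hx. destruct Hx as [l1 [l2 Hl]].
    pose proof (IH x) as Ix. rewrite Hl in Ix |- *. rewrite sum_split.
    specialize (Ix (in_or_app _ _ _ (or_intror (in_eq _ _)))).
    assert (l1 ++ l2 <> []).
    { intro N. apply app_eq_nil in N. destruct N; subst.
      simpl in Hl. discriminate. }
    assert (1 <= list_sum (map tsize l1) + list_sum (map tsize l2)).
    { rewrite <- list_sum_app, <- map_app. now apply sum_pos. }
    lia.
Qed.

Lemma count_bound l c :
  (forall x, In x l -> 2 ^ dval x <= tsize x + 1) ->
  (1 <= count_occ Nat.eq_dec (map dval l) c -> 2 ^ c <= list_sum (map tsize l) + 1) /\
  (2 <= count_occ Nat.eq_dec (map dval l) c -> 2 * 2 ^ c <= list_sum (map tsize l) + 2).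
Proof.
  induction l as [|a l IH]; intros H; simpl; [lia|].
  specialize (IH (fun x Hx => H x (or_intror Hx))). destruct IH as [I1 I2].
  pose proof (H a (or_introl eq_refl)) as Ha.
  destruct (Nat.eq_dec (dval a) c) as [e|ne].
  - subst c. split; intros C.
    + lia.
    + specialize (I1 ltac:(lia)). lia.
  - split; intros C; [specialize (I1 C)|specialize (I2 C)]; lia.
Qed.

Lemma d_bound : forall t, 2 ^ dval t <= tsize t + 1.
Proof.
  apply tree_ind'. intros l IH.
  destruct l as [|a l].
  - simpl. lia.
  - rewrite dval_node, tsize_node. cbv zeta.
    set (M := maxl (map dval (a :: l))).
    destruct (count_bound (a :: l) M IH) as [C1 C2].
    assert (In M (map dval (a :: l))) by (apply maxl_In; discriminate).
    assert (1 <= count_occ Nat.eq_dec (map dval (a :: l)) M).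
    { apply (count_occ_In Nat.eq_dec) in H. lia. }
    destruct (2 <=? count_occ Nat.eq_dec (map dval (a :: l)) M) eqn:E.
    + apply Nat.leb_le in E. specialize (C2 E). rewrite Nat.add_1_r, Nat.pow_succ_r'. lia.
    + specialize (C1 H0). lia.
Qed.

Fixpoint path (n : nat) : tree := match n with 0 => Node [] | S n => Node [path n] end.
Fixpoint cat (n : nat) : tree := match n with 0 => Node [] | S n => Node [cat n; Node []] end.
Fixpoint pt (n : nat) : tree := match n with 0 => Node [] | S n => Node [pt n; pt n] end.

Lemma path_ok n : tsize (path n) = S n /\ hval (path n) = S n.
Proof. induction n; simpl in *; [auto|]. destruct IHn. lia. Qed.

Lemma cat_ok n : tsize (cat n) = 2 * n + 1 /\ rval (cat n) = S n.
Proof.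
  induction n; [simpl; auto|]. destruct IHn as [A B].
  change (cat (S n)) with (Node [cat n; Node []]).
  rewrite tsize_node, rval_node. simpl. rewrite A, B. lia.
Qed.

Lemma pt_ok n : tsize (pt n) + 1 = 2 ^ (S n) /\ dval (pt n) = S n.
Proof.
  induction n; [simpl; auto|]. destruct IHn as [A B].
  change (pt (S n)) with (Node [pt n; pt n]).
  rewrite tsize_node, dval_node. simpl. rewrite B.
  rewrite Nat.max_id, Nat.max_0_r.
  destruct (Nat.eq_dec (S n) (S n)); [|congruence]. simpl.
  split; [|lia]. simpl in A. lia.
Qed.

Theorem mainTheorem12 (q : nat) (hq : 1 <= q) :
  is_G h q q /\ is_G r q ((q + 1) / 2) /\ is_G d q (Nat.log2 (q + 1)).
Proof.
  split; [|split].
  - split.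
    + destruct q as [|n]; [lia|]. exists (Some (path n)). simpl.
      destruct (path_ok n). lia.
    + intros [t|] Ht; cbn [h r d rho] in *; [|lia]. pose proof (h_bound t). lia.
  - split.
    + set (k := (q + 1) / 2).
      assert (Hk : 2 * k <= q + 1) by (apply Nat.mul_div_le; lia).
      assert (Hk1 : 1 <= k) by (apply Nat.div_le_lower_bound; lia).
      exists (Some (cat (k - 1))). simpl. destruct (cat_ok (k - 1)). lia.
    + intros [t|] Ht; cbn [h r d rho] in *; [|lia]. pose proof (r_bound t).
      apply Nat.div_le_lower_bound; lia.
  - split.
    + set (k := Nat.log2 (q + 1)).
      assert (Hk : 2 ^ k <= q + 1) by (apply Nat.log2_spec; lia).
      assert (Hk1 : 1 <= k) by (apply Nat.log2_le_pow2; simpl; lia).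
      exists (Some (pt (k - 1))). simpl. destruct (pt_ok (k - 1)) as [A B].
      replace (S (k - 1)) with k in * by lia. lia.
    + intros [t|] Ht; cbn [h r d rho] in *; [|lia]. pose proof (d_bound t).
      apply Nat.log2_le_pow2; lia.
Qed.
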